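(* Let $\varepsilon>0$, let $\widetilde M_f,\widetilde M_g$ be as in the context, and let $\varphi:\widetilde M_f\to\widetilde M_g$ be the continuous map $\varphi=\phi_1\cup\cdots\cup\phi_{\eta_f}$ obtained from a leaf assignment whose path extensions agree pairwise at least common ancestors of leaves. For each pair of distinct leaves $(u_i,u_j)$ of $\widetilde M_f$ let $v=\mathrm{LCA}(u_i,u_j)$ and let $P_i,P_j$ be their leaf-to-root paths. Traversing downward from $v$ along $P_i$ and $P_j$, let $u_r\in P_i$ and $u_s\in P_j$ be the first pair of nodes such that (i) $\tilde f(u_r)=\tilde f(u_s)$ and (ii) $\tilde f(v)-\tilde f(u_r)>2\varepsilon$ (the $2\varepsilon$-pair of $(u_i,u_j)$, if it exists). Then $\varphi$ satisfies the Ancestor-Shift property (for all $x_1,x_2\in\widetilde M_f$, $\varphi(x_1)\succeq\varphi(x_2)$ implies $i^{2\varepsilon}(x_1)\succeq i^{2\varepsilon}(x_2)$) if and only if $\varphi(u_r)\neq\varphi(u_s)$ for every pair of distinct leaves $(u_i,u_j)$ of $\widetilde M_f$, where for a leaf pair whose $2\varepsilon$-pair does not exist the condition is regarded as satisfied.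
   Context: A finite merge tree is a finite rooted tree regarded as a topological space, with a continuous height function strictly increasing along each edge toward the root. Let $M_f$ (height $\tilde f$, root $r_f$) and $M_g$ (height $\tilde g$, root $r_g$) be finite merge trees with $\tilde g(r_g)=\tilde f(r_f)+\varepsilon$. Let $H=\{\tilde f(u): u \text{ a node of } M_f\}\cup\{\tilde g(w)-\varepsilon: w\text{ a node of } M_g\}$. $\widetilde M_f$ is obtained from $M_f$ by inserting a degree-two node at every point $x$ with $\tilde f(x)\in H$ not already a node; $\widetilde M_g$ from $M_g$ by inserting degree-two nodes at all points with $\tilde g$-value in $H+\varepsilon$ not already nodes. ''Nodes'' below refers to nodes of the augmented trees. Let $u_1,\dots,u_{\eta_f}$ be the leaves of $\widetilde M_f$, and $\phi$ assign to each $u_i$ a node $\phi(u_i)$ of $\widetilde M_g$ with $\tilde g(\phi(u_i))=\tilde f(u_i)+\varepsilon$. With $P_i$ the path from $u_i$ to the root of $\widetilde M_f$ and $P_i'$ that from $\phi(u_i)$ to the root of $\widetilde M_g$, $\phi_i:P_i\to P_i'$ sends $x$ to the unique point of $P_i'$ with $\tilde g$-value $\tilde f(x)+\varepsilon$; it is assumed $\phi_i(v)=\phi_j(v)$ for $v=\mathrm{LCA}(u_i,u_j)$ (lowest common ancestor) for all $i\neq j$, so $\varphi(x)=\phi_i(x)$ for $x\in P_i$ is well-defined. $a\succeq b$ means $a$ lies on the upward path from $b$. For the shift map, $\widetilde M_f$ is regarded as extended by an infinite ray above its root on which $\tilde f$ increases to $+\infty$, and $i^{2\varepsilon}(x)$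 is the unique ancestor of $x$ with $\tilde f$-value $\tilde f(x)+2\varepsilon$. *)

(* Defs.v *)
From HB Require Import structures.
From mathcomp Require Import all_boot all_order all_algebra.
From mathcomp Require Import reals.
Set Implicit Arguments. Unset Strict Implicit. Unset Printing Implicit Defensive.
Import Order.TTheory GRing.Theory Num.Theory.
Local Open Scope ring_scope.

Record mtree (R : realType) := MTree {
  mt_V : finType;
  mt_par : mt_V -> mt_V;
  mt_root : mt_V;
  mt_ht : mt_V -> R;
  mt_par_root : mt_par mt_root = mt_root;
  mt_reach : forall v, exists k, iter k mt_par v = mt_root;
  mt_mono : forall v, v <> mt_root -> mt_ht v < mt_ht (mt_par v) }.

Arguments mt_V {R} m.
Arguments mt_par {R} m _.
Arguments mt_root {R} m.
Arguments mt_ht {R} m _.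

Section MergeTreeDefs.
Variables (R : realType) (T : mtree R).
Local Notation V := (mt_V T).
Local Notation par := (mt_par T).
Local Notation root := (mt_root T).
Local Notation ht := (mt_ht T).

Definition anc_node (a c : V) : Prop := exists k, iter k par c = a.

Definition is_leaf (v : V) : bool := [forall w, (par w == v) ==> (w == v)].

Definition is_lca (u1 u2 v : V) : Prop :=
  [/\ anc_node v u1, anc_node v u2 &
      forall w, anc_node w u1 -> anc_node w u2 -> anc_node w v].

(* Points of the geometric tree: (c, t) = the point of height t on the edge
   going up from node c (t = ht c is the node c itself).  This representation
   is unique.  Extended points allow the infinite ray above the root. *)
Definition point := (V * R)%type.

Definition is_ext_point (x : point) : Prop :=
  ht x.1 <= x.2 /\ (x.1 <> root -> x.2 < ht (par x.1)).

Definition is_point (x : point) : Prop :=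
  is_ext_point x /\ (x.1 = root -> x.2 = ht root).

Definition node_pt (v : V) : point := (v, ht v).

Definition is_node_pt (x : point) : Prop := x.2 = ht x.1.

Definition anc (a x : point) : Prop := anc_node a.1 x.1 /\ x.2 <= a.2.

Definition shift2 (eps : R) (x y : point) : Prop :=
  [/\ is_ext_point y, anc y x & y.2 = x.2 + 2 * eps].

Definition twoeps_pair (eps : R) (ui uj ur us : V) : Prop :=
  exists v, is_lca ui uj v /\ anc_node ur ui /\ anc_node us uj /\
    ht ur = ht us /\ 2 * eps < ht v - ht ur /\
    forall r s, anc_node r ui -> anc_node s uj -> ht r = ht s ->
      2 * eps < ht v - ht r -> ht r <= ht ur.

End MergeTreeDefs.

Arguments anc_node {R} T a c.
Arguments is_leaf {R} T v.
Arguments is_lca {R} T u1 u2 v.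
Arguments point {R} T.
Arguments is_ext_point {R} T x.
Arguments is_point {R} T x.
Arguments node_pt {R} T v.
Arguments is_node_pt {R} T x.
Arguments anc {R} T a x.
Arguments shift2 {R} T eps x y.
Arguments twoeps_pair {R} T eps ui uj ur us.

Section PairDefs.
Variables (R : realType) (Tf Tg : mtree R) (eps : R).

Definition Hset (h : R) : Prop :=
  (exists u : mt_V Tf, h = mt_ht Tf u) \/ (exists w : mt_V Tg, h = mt_ht Tg w - eps).

Definition augmented : Prop :=
  (forall x, is_point Tf x -> Hset x.2 -> is_node_pt Tf x) /\
  (forall y, is_point Tg y -> Hset (y.2 - eps) -> is_node_pt Tg y).

Definition phi_path (a : mt_V Tf -> mt_V Tg) (u : mt_V Tf)
    (x : point Tf) (y : point Tg) : Prop :=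
  [/\ is_point Tg y, anc Tg y (node_pt Tg (a u)) & y.2 = x.2 + eps].

Definition ancestor_shift (phi : point Tf -> point Tg) : Prop :=
  forall x1 x2, is_point Tf x1 -> is_point Tf x2 -> anc Tg (phi x1) (phi x2) ->
  forall y1 y2, shift2 Tf eps x1 y1 -> shift2 Tf eps x2 y2 -> anc Tf y1 y2.

End PairDefs.

Arguments Hset {R} Tf Tg eps h.
Arguments augmented {R} Tf Tg eps.
Arguments phi_path {R} Tf Tg eps a u x y.
Arguments ancestor_shift {R} Tf Tg eps phi.

(* Main.v *)
Require Import Defs.
From HB Require Import structures.
From mathcomp Require Import all_boot all_order all_algebra.
From mathcomp Require Import reals lra.
From Stdlib Require Import Classical.
Set Implicit Arguments. Unset Strict Implicit. Unset Printing Implicit Defensive.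
Import Order.TTheory GRing.Theory Num.Theory.
Local Open Scope ring_scope.

Section Fin.
Variables (R : realType) (V : finType) (f : V -> R).

Lemma card_lt (x y : V) : f y < f x ->
  (#|[set z | (f z < f y)%R]| < #|[set z | (f z < f x)%R]|)%N.
Proof.
move=> hy; apply: proper_card; apply/properP; split.
  by apply/subsetP => z; rewrite !inE => h; exact: lt_trans h hy.
by exists y; rewrite inE ?ltxx.
Qed.

Lemma f_ind (Q : V -> Prop) :
  (forall x, (forall y, f y < f x -> Q y) -> Q x) -> forall x, Q x.
Proof.
move=> H.
suff: forall n x, (#|[set z | (f z < f x)%R]| <= n)%N -> Q x.
  by move=> h x; apply: (h _ x (leqnn _)).
elim=> [|n IH] x Hx; apply: H => y hy.
  by have := leq_trans (card_lt hy) Hx.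
apply: IH; have := card_lt hy; move=> h; rewrite -ltnS; exact: leq_trans h Hx.
Qed.

Lemma min_exists (P : V -> Prop) x : P x ->
  exists m, P m /\ forall y, P y -> f m <= f y.
Proof.
elim/f_ind: x => x IH Px.
case: (classic (exists y, P y /\ f y < f x)) => [[y [Py hy]]|hn].
  exact: IH hy Py.
exists x; split => // y Py; rewrite leNgt; apply/negP => h; apply: hn; by exists y.
Qed.
End Fin.

Section Tree.
Variables (R : realType) (T : mtree R).
Local Notation V := (mt_V T).
Local Notation par := (mt_par T).
Local Notation root := (mt_root T).
Local Notation ht := (mt_ht T).
Local Notation anc := (anc_node T).

Lemma iter_root k : iter k par root = root.
Proof. by elim: k => //= k ->; exact: mt_par_root. Qed.

Lemma ht_par v : ht v <= ht (par v).
Proof.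
case: (eqVneq v root) => [->|nv]; first by rewrite mt_par_root.
by apply: ltW; apply: mt_mono; apply/eqP.
Qed.

Lemma anc_refl a : anc a a. Proof. by exists 0%N. Qed.
Lemma anc_par c : anc (par c) c. Proof. by exists 1%N. Qed.
Lemma anc_trans a b c : anc a b -> anc b c -> anc a c.
Proof. by move=> [k <-] [l <-]; exists (k + l)%N; rewrite iterD. Qed.
Lemma anc_ht a c : anc a c -> ht c <= ht a.
Proof. move=> [k <-]; elim: k => //= k IH; exact: le_trans IH (ht_par _). Qed.
Lemma anc_root c : anc root c. Proof. exact: mt_reach. Qed.
Lemma ht_root c : ht c <= ht root. Proof. exact: anc_ht (anc_root c). Qed.
Lemma anc_chain a b c : anc a c -> anc b c -> anc a b \/ anc b a.
Proof.
move=> [k <-] [l <-]; case: (leqP k l) => h.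
  by right; exists (l - k)%N; rewrite -iterD subnK.
by left; exists (k - l)%N; rewrite -iterD subnK // ltnW.
Qed.
Lemma anc_strict a c : anc a c -> a <> c -> anc a (par c) /\ c <> root.
Proof.
move=> [[|k] <-] //= ne; split; first by exists k; rewrite -iterSr.
by move=> ec; apply: ne; rewrite ec iter_root /= mt_par_root.
Qed.
Lemma anc_antisym a b : anc a b -> anc b a -> a = b.
Proof.
move=> Hab Hba; case: (eqVneq a b) => // ne.
have [h1 nb] := anc_strict Hab (elimN eqP ne).
have := lt_le_trans (mt_mono nb) (anc_ht h1).
by rewrite ltNge (anc_ht Hba).
Qed.

Lemma pt_cmp (p q : point T) c : is_ext_point T p -> is_ext_point T q ->
  anc p.1 c -> anc q.1 c -> p.2 <= q.2 -> anc q.1 p.1.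
Proof.
move=> ep eqq Hp Hq hpq; case: (anc_chain Hp Hq) => // Hpq.
case: (eqVneq p.1 q.1) => [e|ne]; first by rewrite e; exact: anc_refl.
have [h1 nr] := anc_strict Hpq (elimN eqP ne).
have h2 := proj2 eqq nr; have h3 := anc_ht h1; have h4 := proj1 ep.
exfalso; lra.
Qed.

Lemma pt_eq (p q : point T) c : is_ext_point T p -> is_ext_point T q ->
  anc p.1 c -> anc q.1 c -> p.2 = q.2 -> p = q.
Proof.
move=> ep eqq Hp Hq e.
have e1 : p.2 <= q.2 by rewrite e.
have e2 : q.2 <= p.2 by rewrite e.
have h1 := pt_cmp ep eqq Hp Hq e1.
have h2 := pt_cmp eqq ep Hq Hp e2.
apply: injective_projections => //; exact: anc_antisym.
Qed.

Lemma same_edge (p q : point T) c : is_ext_point T p -> is_ext_point T q ->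
  anc p.1 c -> anc q.1 c -> p.2 <= q.2 ->
  (forall v, p.2 < ht v -> ht v <= q.2 -> False) -> p.1 = q.1.
Proof.
move=> ep eqq Hp Hq hpq H.
have A := pt_cmp ep eqq Hp Hq hpq.
case: (eqVneq q.1 p.1) => [//|ne].
have [h1 nr] := anc_strict A (elimN eqP ne).
have h2 := proj2 ep nr; have h3 := anc_ht h1; have h4 := proj1 eqq.
exfalso; apply: (H q.1); lra.
Qed.

Lemma node_is_point v : is_point T (node_pt T v).
Proof. split => /=; last by move=> ->. split => //=; move=> nv; exact: mt_mono. Qed.

Lemma exists_up c t : ht c <= t ->
  exists y : point T, is_ext_point T y /\ anc y.1 c /\ y.2 = t.
Proof.
have rootcase : forall t, ht root <= t ->
    exists y : point T, is_ext_point T y /\ anc y.1 root /\ y.2 = t.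
  by move=> t' h; exists (root, t'); split; [split | split; [exact: anc_refl|]].
have [k Hk] := mt_reach c.
elim: k c Hk => [|k IH] c Hk hc; first by move: hc; rewrite /= in Hk; rewrite Hk; exact: rootcase.
case: (eqVneq c root) => [ec|nc]; first by move: hc; rewrite ec; exact: rootcase.
case: (ltP t (ht (par c))) => h.
  by exists (c, t); split; [split | split; [exact: anc_refl|]].
have Hk' : iter k par (par c) = root by rewrite -iterSr.
have [y [ey [ay ty]]] := IH (par c) Hk' h.
by exists y; split => //; split => //; exact: anc_trans ay (anc_par c).
Qed.

Lemma exists_up_pt c t : ht c <= t -> t <= ht root ->
  exists y : point T, is_point T y /\ anc y.1 c /\ y.2 = t.
Proof.
move=> h1 h2; have [y [ey [ay ty]]] := exists_up h1.
exists y; split => //; split => // er; have := proj1 ey; rewrite er => h3.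
by apply/eqP; rewrite eq_le h3 ty h2.
Qed.

Lemma leaf_below c : exists u, is_leaf T u /\ anc c u.
Proof.
elim/(@f_ind _ _ ht): c => c IH.
case Hl: (is_leaf T c); first by exists c; split => //; exact: anc_refl.
move/negbT/forallPn: Hl => [w]; rewrite negb_imply => /andP [/eqP pw nw].
have nr : w <> root.
  by move=> er; move: nw pw; rewrite er mt_par_root => /eqP.
have hw : ht w < ht c by rewrite -pw; exact: mt_mono.
have [u [lu au]] := IH w hw.
by exists u; split => //; apply: anc_trans au; rewrite -pw; exact: anc_par.
Qed.

Lemma lca_exists u1 u2 : exists w, is_lca T u1 u2 w.
Proof.
have [m [[m1 m2] Hm]] := @min_exists R V ht (fun w => anc w u1 /\ anc w u2)
  root (conj (anc_root _) (anc_root _)).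
exists m; split => // w a1 a2.
case: (anc_chain a1 m1) => // h.
case: (eqVneq m w) => [->|ne]; first exact: anc_refl.
have [h1 nr] := anc_strict h (elimN eqP ne).
have := lt_le_trans (mt_mono nr) (anc_ht h1).
by rewrite ltNge (Hm w (conj a1 a2)).
Qed.

Lemma lca_sym u1 u2 w : is_lca T u1 u2 w -> is_lca T u2 u1 w.
Proof. by move=> [a b c]; split => // x h1 h2; exact: c. Qed.

Lemma lca_above c1 c2 u1 u2 w : anc c1 u1 -> anc c2 u2 ->
  ~ (anc c1 c2 \/ anc c2 c1) -> is_lca T u1 u2 w -> anc w c1 /\ w <> c1.
Proof.
move=> a1 a2 Hn [w1 w2 _].
case: (anc_chain w1 a1) => h.
  split => // e; apply: Hn; rewrite -e; exact: anc_chain w2 a2.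
exfalso; apply: Hn; exact: anc_chain (anc_trans h w2) a2.
Qed.

Lemma below_strict (x : point T) w : is_ext_point T x -> anc w x.1 -> w <> x.1 ->
  x.2 < ht w.
Proof.
move=> ex aw ne; have [h1 nr] := anc_strict aw ne.
exact: lt_le_trans (proj2 ex nr) (anc_ht h1).
Qed.
End Tree.

Theorem theorem4p8 (R : realType) (Tf Tg : mtree R) (eps : R) :
  0 < eps ->
  mt_ht Tg (mt_root Tg) = mt_ht Tf (mt_root Tf) + eps ->
  augmented Tf Tg eps ->
  forall a : mt_V Tf -> mt_V Tg,
  (forall u, is_leaf Tf u -> mt_ht Tg (a u) = mt_ht Tf u + eps) ->
  (forall ui uj v, is_leaf Tf ui -> is_leaf Tf uj -> ui <> uj -> is_lca Tf ui uj v ->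
     forall y1 y2, phi_path Tf Tg eps a ui (node_pt Tf v) y1 ->
       phi_path Tf Tg eps a uj (node_pt Tf v) y2 -> y1 = y2) ->
  forall phi : point Tf -> point Tg,
  (forall u x, is_leaf Tf u -> is_point Tf x -> anc Tf x (node_pt Tf u) ->
     phi_path Tf Tg eps a u x (phi x)) ->
  (ancestor_shift Tf Tg eps phi <->
   forall ui uj, is_leaf Tf ui -> is_leaf Tf uj -> ui <> uj ->
     forall ur us, twoeps_pair Tf eps ui uj ur us ->
       phi (node_pt Tf ur) <> phi (node_pt Tf us)).
Proof.
move=> eps0 _ aug a _ _ phi Hphi; split.
- move=> AS ui uj li lj nij ur us [v [[av1 av2 lca] [ari [asj [hrs [hlt _]]]]]] Heq.
  have e1 : mt_ht Tf ur <= mt_ht Tf ur + 2 * eps by lra.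
  have e2 : mt_ht Tf us <= mt_ht Tf us + 2 * eps by lra.
  have [y1 [ey1 [a1 t1]]] := exists_up e1.
  have [y2 [ey2 [a2 t2]]] := exists_up e2.
  have Aphi : anc Tg (phi (node_pt Tf ur)) (phi (node_pt Tf us)).
    by rewrite Heq; split; [exact: anc_refl | exact: lexx].
  have S1 : shift2 Tf eps (node_pt Tf ur) y1.
    by split => //; split => //=; rewrite t1; lra.
  have S2 : shift2 Tf eps (node_pt Tf us) y2.
    by split => //; split => //=; rewrite t2; lra.
  have [A _] := AS _ _ (node_is_point _) (node_is_point _) Aphi _ _ S1 S2.
  have hv : anc_node Tf y1.1 v :=
    lca _ (anc_trans a1 ari) (anc_trans A (anc_trans a2 asj)).
  have h1 := anc_ht hv; have h2 := proj1 ey1; lra.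
- move=> C x1 x2 px1 px2 [A12 H12] y1 y2 [ey1 [ay1a ay1b] hy1] [ey2 [ay2a ay2b] hy2].
  have [u1 [l1 au1]] := leaf_below x1.1.
  have [u2 [l2 au2]] := leaf_below x2.1.
  have ax1 : anc Tf x1 (node_pt Tf u1).
    by split => //=; exact: le_trans (anc_ht au1) (proj1 (proj1 px1)).
  have ax2 : anc Tf x2 (node_pt Tf u2).
    by split => //=; exact: le_trans (anc_ht au2) (proj1 (proj1 px2)).
  have [pf1 [apf1 _] hf1] := Hphi u1 x1 l1 px1 ax1.
  have [pf2 [apf2 _] hf2] := Hphi u2 x2 l2 px2 ax2.
  have hx : x2.2 <= x1.2 by rewrite hf1 hf2 in H12; lra.
  case: (classic (anc_node Tf x1.1 x2.1 \/ anc_node Tf x2.1 x1.1)) => [Hc|Hn].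
    have A : anc_node Tf x1.1 x2.1.
      case: Hc => // h; exact: (pt_cmp (proj1 px2) (proj1 px1) h (anc_refl _) hx).
    split; last by lra.
    apply: (pt_cmp ey2 ey1 ay2a (anc_trans ay1a A)); lra.
  have [w lw] := lca_exists u1 u2.
  have [aw1 nw1] := lca_above au1 au2 Hn lw.
  have Hn' : ~ (anc_node Tf x2.1 x1.1 \/ anc_node Tf x1.1 x2.1) by tauto.
  have [aw2 nw2] := lca_above au2 au1 Hn' (lca_sym lw).
  have hw1 := below_strict (proj1 px1) aw1 nw1.
  case: (leP (mt_ht Tf w) y1.2) => [hge|hlt].
    split; last by lra.
    have A1 : anc_node Tf y1.1 w :=
      pt_cmp (proj1 (node_is_point w)) ey1 aw1 ay1a hge.
    apply: (pt_cmp ey2 ey1 ay2a (anc_trans A1 aw2)); lra.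
  exfalso.
  have n12 : u1 <> u2.
    by move=> e; apply: Hn; rewrite e in au1; exact: anc_chain au1 au2.
  pose P r := anc_node Tf r u1 /\ (exists s, anc_node Tf s u2 /\
       mt_ht Tf r = mt_ht Tf s) /\ 2 * eps < mt_ht Tf w - mt_ht Tf r.
  have hroot := ht_root w.
  have [r0 Pr0] : exists r, P r.
    have hx1 := proj1 (proj1 px1); have hx2 := proj1 (proj1 px2).
    case: (leP (mt_ht Tf x2.1) (mt_ht Tf x1.1)) => hle.
      have [q [pq [aq tq]]] := @exists_up_pt _ Tf x2.1 (mt_ht Tf x1.1) hle
        (le_trans (proj1 (proj1 px1)) (ltW (lt_le_trans hw1 hroot))).
      have nq : is_node_pt Tf q by apply: (proj1 aug) => //; rewrite tq; left; exists x1.1.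
      exists x1.1; split => //; split; last by lra.
      exists q.1; split; [exact: anc_trans aq au2 | by rewrite -nq tq].
    have [q [pq [aq tq]]] := @exists_up_pt _ Tf x1.1 (mt_ht Tf x2.1) (ltW hle)
        (le_trans (proj1 (proj1 px2)) (le_trans hx (ltW (lt_le_trans hw1 hroot)))).
    have nq : is_node_pt Tf q by apply: (proj1 aug) => //; rewrite tq; left; exists x2.1.
    exists q.1; split; first exact: anc_trans aq au1.
    split; last by rewrite -nq tq; lra.
    by exists x2.1; split => //; rewrite -nq tq.
  have [ur [[aur [[us [aus hrs]] hltr]] Hmax]] :=
    @min_exists R _ (fun r => - mt_ht Tf r) P r0 Pr0.
  have Hmax' : forall r, P r -> mt_ht Tf r <= mt_ht Tf ur.
    by move=> r Pr; have := Hmax r Pr; rewrite lerN2.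
  have TP : twoeps_pair Tf eps u1 u2 ur us.
    exists w; split => //; split => //; split => //; split => //; split => //.
    move=> r s ar as_ hrs' hl; apply: Hmax'; split => //; split => //.
    by exists s.
  apply: (C u1 u2 l1 l2 n12 ur us TP).
  have noH : forall h', Hset Tf Tg eps h' -> mt_ht Tf ur < h' ->
      h' < mt_ht Tf w - 2 * eps -> False.
    move=> h' Hh h1 h2.
    have hu1 := anc_ht aur; have hu2 := anc_ht aus.
    have r1 : mt_ht Tf ur <= h' by lra.
    have r2 : mt_ht Tf us <= h' by lra.
    have r3 : h' <= mt_ht Tf (mt_root Tf) by lra.
    have [q1 [pq1 [aq1 tq1]]] := exists_up_pt r1 r3.
    have [q2 [pq2 [aq2 tq2]]] := exists_up_pt r2 r3.
    have nq1 : is_node_pt Tf q1 by apply: (proj1 aug) => //; rewrite tq1.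
    have nq2 : is_node_pt Tf q2 by apply: (proj1 aug) => //; rewrite tq2.
    have : P q1.1.
      split; first exact: anc_trans aq1 aur.
      split; last by rewrite -nq1 tq1; lra.
      by exists q2.1; split; [exact: anc_trans aq2 aus | rewrite -nq1 -nq2 tq1 tq2].
    move/Hmax'; rewrite -nq1 tq1; lra.
  have hx1 := proj1 (proj1 px1); have hx2 := proj1 (proj1 px2).
  have tz1 : mt_ht Tf x2.1 <= x1.2 by lra.
  have tz2 : x1.2 <= mt_ht Tf (mt_root Tf) by lra.
  have [z [pz [az tz]]] := exists_up_pt tz1 tz2.
  have azn : anc Tf z (node_pt Tf u2).
    by split => /=; [exact: anc_trans az au2 | rewrite tz; have := anc_ht au2; lra].
  have [pfz [apfz _] hfz] := Hphi u2 z l2 pz azn.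
  have Exz : phi x1 = phi z.
    apply: (pt_eq (proj1 pf1) (proj1 pfz) A12); last by rewrite hf1 hfz tz.
    apply: (pt_cmp (proj1 pf2) (proj1 pfz) apf2 apfz); rewrite hf2 hfz tz; lra.
  have aurn : anc Tf (node_pt Tf ur) (node_pt Tf u1) by split => //=; exact: anc_ht aur.
  have ausn : anc Tf (node_pt Tf us) (node_pt Tf u2) by split => //=; exact: anc_ht aus.
  have [pfr [apfr _] hfr] := Hphi u1 _ l1 (node_is_point _) aurn.
  have [pfs [apfs _] hfs] := Hphi u2 _ l2 (node_is_point _) ausn.
  rewrite /= in hfr hfs.
  case: (leP (mt_ht Tf ur) x1.2) => hc.
    have E1 : (phi (node_pt Tf ur)).1 = (phi x1).1.
      apply: (same_edge (proj1 pfr) (proj1 pf1) apfr apf1); first by rewrite hfr hf1; lra.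
      move=> v h1 h2; apply: (noH (mt_ht Tg v - eps)); first by right; exists v.
        rewrite hfr in h1; lra.
      rewrite hf1 in h2; lra.
    have E2 : (phi (node_pt Tf us)).1 = (phi z).1.
      apply: (same_edge (proj1 pfs) (proj1 pfz) apfs apfz); first by rewrite hfs hfz tz; lra.
      move=> v h1 h2; apply: (noH (mt_ht Tg v - eps)); first by right; exists v.
        rewrite hfs in h1; lra.
      rewrite hfz tz in h2; lra.
    by apply: injective_projections; [rewrite E1 E2 Exz | rewrite hfr hfs hrs].
  have B1 : anc_node Tg (phi (node_pt Tf ur)).1 (phi x1).1.
    apply: (pt_cmp (proj1 pf1) (proj1 pfr) apf1 apfr); rewrite hf1 hfr; lra.
  have B2 : anc_node Tg (phi (node_pt Tf us)).1 (phi x1).1.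
    rewrite Exz; apply: (pt_cmp (proj1 pfz) (proj1 pfs) apfz apfs); rewrite hfz tz hfs; lra.
  apply: (pt_eq (proj1 pfr) (proj1 pfs) B1 B2); by rewrite hfr hfs hrs.
Qed.
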